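(* Let $\mathfrak{X}$ be a Bourgain–Delbaen space determined by $(\Gamma_q,i_q)_q$ and let $\Gamma'$ be a self-determined subset of $\Gamma$. Write $\{q:\Gamma'\cap\Delta_q\neq\varnothing\}=\{q_0<q_1<q_2<\cdots\}$, $\Gamma'_{q}=\Gamma'\cap\Gamma_q$, let $R$ denote restriction onto $\Gamma'$, and for each $s$ define $i'_{q_s}:\ell_\infty(\Gamma'_{q_s})\to\ell_\infty(\Gamma')$ by $i'_{q_s}(x)=R(i_{q_s}(x))$, where $x$ is identified with a vector in $\ell_\infty(\Gamma_{q_s})$ vanishing off $\Gamma'_{q_s}$. Then $(i'_{q_s})_s$ is a compatible sequence of extension operators with $\sup_s\|i'_{q_s}\|\leqslant\sup_q\|i_q\|$; hence $(\Gamma'_{q_s},i'_{q_s})_s$ defines a Bourgain–Delbaen space $\mathfrak{X}_{(\Gamma'_{q_s},i'_{q_s})_s}$.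
   Context: Bourgain–Delbaen spaces: given a strictly increasing sequence $(\Gamma_q)_q$ of non-empty finite sets with union $\Gamma$ and linear extension operators $i_q:\ell_\infty(\Gamma_q)\to\ell_\infty(\Gamma)$ ($i_q(x)|_{\Gamma_q}=x$) with $\sup_q\|i_q\|<\infty$ that are compatible (for $p<q$, $i_p=i_q\circ r_q\circ i_p$, with $r_q$ restriction onto $\Gamma_q$), set $\Delta_1=\Gamma_1$, $\Delta_{q+1}=\Gamma_{q+1}\setminus\Gamma_q$, $d_\gamma=i_q(e_\gamma)$ for $\gamma\in\Delta_q$; the Bourgain–Delbaen space $\mathfrak{X}_{(\Gamma_q,i_q)_q}$ is the closed span of $\{d_\gamma\}$ in $\ell_\infty(\Gamma)$. $e_\gamma^*$ denotes evaluation at $\gamma$ restricted to the space, $(d_\gamma^* )$ the functionals biorthogonal to $(d_\gamma)$. An infinite subset $\Gamma'\subseteq\Gamma$ is self-determined if each $d_\gamma^*$, $\gamma\in\Gamma'$, lies in the linear span of $\{e_\eta^*:\eta\in\Gamma'\}$. *)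

(* Defs.v *)
From HB Require Import structures.
From mathcomp Require Import all_boot all_order all_algebra.
From mathcomp Require Import boolp classical_sets cardinality reals.
Set Implicit Arguments. Unset Strict Implicit. Unset Printing Implicit Defensive.
Import Order.TTheory GRing.Theory Num.Theory.
Local Open Scope classical_set_scope.
Local Open Scope ring_scope.

(* Vectors of l_oo(A), for A a subset of the ambient index type T, are modelled
   as functions T -> R vanishing off A (and bounded). *)

Section BD.
Variables (R : realType) (T : Type).

Definition supported (A : set T) (x : T -> R) : Prop := forall t, ~ A t -> x t = 0.

Definition bounded_vec (x : T -> R) : Prop := exists M : R, forall t, `|x t| <= M.

Definition restr (A : set T) (y : T -> R) : T -> R :=
  fun t => if `[< A t >] then y t else 0.

Definition unitvec (g : T) : T -> R := fun t => if `[< t = g >] then 1 else 0.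

Definition is_ext_op (Gq G : set T) (j : (T -> R) -> (T -> R)) : Prop :=
  [/\ (forall (a : R) x y, supported Gq x -> supported Gq y ->
         j (fun t => a * x t + y t) = (fun t => a * j x t + j y t)),
      (forall x, supported Gq x -> supported G (j x) /\ bounded_vec (j x)) &
      (forall x, supported Gq x -> forall t, Gq t -> j x t = x t)].

Definition op_norm_le (Gq : set T) (j : (T -> R) -> (T -> R)) (C : R) : Prop :=
  forall x, supported Gq x -> forall M : R, (forall t, `|x t| <= M) ->
    forall t, `|j x t| <= C * M.

Definition compatible (Gam : nat -> set T) (i : nat -> (T -> R) -> (T -> R)) : Prop :=
  forall p q : nat, (p < q)%N -> forall x, supported (Gam p) x ->
    i p x = i q (restr (Gam q) (i p x)).

Definition BD_data (G : set T) (Gam : nat -> set T) (i : nat -> (T -> R) -> (T -> R)) : Prop :=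
  (forall q, finite_set (Gam q) /\ Gam q !=set0) /\
  (forall q, Gam q `<` Gam q.+1) /\
  \bigcup_q Gam q = G /\
  (forall q, is_ext_op (Gam q) G (i q)) /\
  (exists C : R, forall q, op_norm_le (Gam q) (i q) C) /\
  compatible Gam i.

Definition Delta (Gam : nat -> set T) (q : nat) : set T :=
  match q with 0 => Gam 0%N | q'.+1 => Gam q'.+1 `\` Gam q' end.

End BD.

Section BDspace.
Variables (R : realType) (T : Type).
Variables (Gam : nat -> set T) (i : nat -> (T -> R) -> (T -> R)).

Definition qidx (g : T) : nat := xget 0%N [set q | Delta Gam q g].

Definition dvec (g : T) : T -> R := i (qidx g) (unitvec R g).

Definition span_comb (s : seq T) (c : T -> R) : T -> R :=
  fun t => \sum_(k <- s) c k * dvec k t.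

Definition BDspace (x : T -> R) : Prop :=
  bounded_vec x /\
  forall e : R, 0 < e -> exists (s : seq T) (c : T -> R),
    forall t, `|x t - span_comb s c t| <= e.

Definition is_dstar (g : T) (f : (T -> R) -> R) : Prop :=
  [/\ (forall (a : R) x y, BDspace x -> BDspace y ->
         f (fun t => a * x t + y t) = a * f x + f y),
      (exists C : R, forall x, BDspace x -> forall M : R, (forall t, `|x t| <= M) ->
         `|f x| <= C * M) &
      (forall h, f (dvec h) = unitvec R g h)].

Definition self_determined (G' : set T) : Prop :=
  infinite_set G' /\
  forall g, G' g -> forall f, is_dstar g f ->
    exists (s : seq T) (c : T -> R), (forall k, ~ G' k -> c k = 0) /\
      forall x, BDspace x -> f x = \sum_(k <- s) c k * x k.

End BDspace.

(* Main.v *)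
Require Import Defs.
From HB Require Import structures.
From mathcomp Require Import all_boot all_order all_algebra.
From mathcomp Require Import boolp classical_sets cardinality reals.
From mathcomp Require Import ring lra.
Set Implicit Arguments. Unset Strict Implicit. Unset Printing Implicit Defensive.
Import Order.TTheory GRing.Theory Num.Theory.
Local Open Scope classical_set_scope.
Local Open Scope ring_scope.

Section Lin.
Variables (R : realType) (T : Type).
Implicit Types (A B G : set T) (j : (T -> R) -> (T -> R)) (x y : T -> R).

Lemma restrE A y t : restr A y t = if `[< A t >] then y t else 0.
Proof. by []. Qed.

Lemma restr_in A y t : A t -> restr A y t = y t.
Proof. by move=> At; rewrite /restr asboolT. Qed.

Lemma restr_out A y t : ~ A t -> restr A y t = 0.
Proof. by move=> At; rewrite /restr asboolF. Qed.

Lemma restr_supp A y : supported A (restr A y).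
Proof. by move=> t /restr_out ->. Qed.

Lemma supp_sub A B x : A `<=` B -> supported A x -> supported B x.
Proof. by move=> AB sx t Bt; apply: sx => /AB. Qed.

Lemma supp0 A : supported A (fun _ : T => 0 : R).
Proof. by []. Qed.

Lemma suppL A (a : R) x y : supported A x -> supported A y ->
  supported A (fun t => a * x t + y t).
Proof. by move=> sx sy t At; rewrite sx // sy // mulr0 addr0. Qed.

Lemma lin0 A G j : is_ext_op A G j -> j (fun _ => 0) = (fun _ => 0).
Proof.
case=> L _ _; have := L 1 _ _ (@supp0 A) (@supp0 A).
have -> : (fun t : T => 1 * (0:R) + 0) = (fun _ => 0) by apply: funext => t; ring.
move=> E; apply: funext => t; have := congr1 (fun f => f t) E => /= H.
by have : j (fun _ => 0) t = 0 by lra.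
Qed.

Lemma linE A G j (a : R) x y : is_ext_op A G j -> supported A x -> supported A y ->
  forall t, j (fun t => a * x t + y t) t = a * j x t + j y t.
Proof. by case=> L _ _ sx sy t; rewrite (L a x y sx sy). Qed.

Lemma lin_sum A G j (I : Type) (s : seq I) (c : I -> R) (v : I -> T -> R) :
  is_ext_op A G j -> (forall k, supported A (v k)) ->
  forall t, j (fun t => \sum_(k <- s) c k * v k t) t = \sum_(k <- s) c k * j (v k) t.
Proof.
move=> jE sv; elim: s => [|k s IH] t.
  under eq_fun do rewrite big_nil; by rewrite (lin0 jE) big_nil.
have sS : supported A (fun t => \sum_(k <- s) c k * v k t).
  by move=> u Au; rewrite big1_idem //= => [|kk _]; [rewrite addr0 | rewrite sv // mulr0].
under eq_fun do rewrite big_cons.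
by rewrite (linE _ jE (sv k) sS) IH big_cons.
Qed.

Lemma ext_restr A G j y : is_ext_op A G j -> supported A y -> restr A (j y) = y.
Proof.
case=> _ _ E sy; apply: funext => t.
by case: (pselect (A t)) => At; [rewrite restr_in // E | rewrite restr_out // sy].
Qed.

End Lin.

Section BD2.
Variables (R : realType) (T : Type) (Gam : nat -> set T) (i : nat -> (T -> R) -> (T -> R)).
Hypothesis Hext : forall q, is_ext_op (Gam q) [set: T] (i q).
Hypothesis Hinc : forall q, Gam q `<` Gam q.+1.
Hypothesis Hcup : \bigcup_q Gam q = [set: T].
Hypothesis Hcomp : compatible Gam i.
Hypothesis Hfin : forall q, finite_set (Gam q).
Hypothesis HCb : exists C : R, forall q, op_norm_le (Gam q) (i q) C.
Implicit Types (x y z : T -> R) (g h t : T).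

Lemma Gmono p q : (p <= q)%N -> Gam p `<=` Gam q.
Proof.
elim: q => [|q IH]; first by rewrite leqn0 => /eqP ->.
rewrite leq_eqVlt ltnS => /orP[/eqP -> //|/IH pq].
by move=> t /pq; apply: (properW (Hinc q)).
Qed.

Lemma DeltaP q g : Delta Gam q g <-> Gam q g /\ forall p, (p < q)%N -> ~ Gam p g.
Proof.
case: q => [|q] /=; first by split=> [h|[]//]; split.
split=> [[h1 h2]|[h1 h2]]; last by split=> //; apply: h2.
by split=> // p; rewrite ltnS => /Gmono pq /pq.
Qed.

Lemma Delta_uniq p q g : Delta Gam p g -> Delta Gam q g -> p = q.
Proof.
move=> /DeltaP[hp np] /DeltaP[hq nq].
by case: (ltngtP p q) => // [/nq|/np].
Qed.

Lemma Delta_ex g : exists q, Delta Gam q g.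
Proof.
have : (\bigcup_q Gam q) g by rewrite Hcup.
case=> n _ gn.
have ex : exists n, `[< Gam n g >] by exists n; apply/asboolP.
exists (ex_minn ex); case: ex_minnP => m /asboolP gm mmin.
apply/DeltaP; split=> // p pm gp.
by have := mmin p (asboolT gp); rewrite leqNgt pm.
Qed.

Lemma qidxP g : Delta Gam (qidx Gam g) g.
Proof. exact: (@xgetPex _ 0%N [set q | Delta Gam q g] (Delta_ex g)). Qed.

Lemma qidx_eq q g : Delta Gam q g -> qidx Gam g = q.
Proof. by move=> h; apply: (Delta_uniq (qidxP g) h). Qed.

Lemma Gam_qidx g : Gam (qidx Gam g) g.
Proof. by case/DeltaP: (qidxP g). Qed.

Lemma qidx_le q g : Gam q g -> (qidx Gam g <= q)%N.
Proof.
move=> gq; case/DeltaP: (qidxP g) => _ h; rewrite leqNgt; apply/negP => /h; exact.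
Qed.

Lemma qidx_min p g : (p < qidx Gam g)%N -> ~ Gam p g.
Proof. by case/DeltaP: (qidxP g) => _; apply. Qed.


Lemma extE q x t : supported (Gam q) x -> Gam q t -> i q x t = x t.
Proof. by case: (Hext q) => _ _ E sx; apply: E. Qed.

Lemma unitvec_supp (A : set T) g : A g -> supported A (unitvec R g).
Proof. by move=> Ag t At; rewrite /unitvec asboolF // => tg; apply: At; rewrite tg. Qed.

Lemma unitvecC g h : unitvec R g h = unitvec R h g.
Proof.
rewrite /unitvec; case: (pselect (h = g)) => [->//|hg].
by rewrite !asboolF // => gh; apply: hg.
Qed.

Lemma unitvec_neq g h : g <> h -> unitvec R g h = 0.
Proof. by move=> gh; rewrite /unitvec asboolF // => hg; apply: gh. Qed.

Lemma unitvec_eq g : unitvec R g g = 1.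
Proof. by rewrite /unitvec asboolT. Qed.

Lemma restrL (A : set T) (a : R) x y :
  restr A (fun t => a * x t + y t) = (fun t => a * restr A x t + restr A y t).
Proof.
apply: funext => t; case: (pselect (A t)) => At.
  by rewrite !restr_in.
by rewrite !restr_out // mulr0 addr0.
Qed.

Lemma compat_le p q x : (p <= q)%N -> supported (Gam p) x ->
  i q (restr (Gam q) (i p x)) = i p x.
Proof.
rewrite leq_eqVlt => /orP[/eqP <-|pq] sx; first by rewrite (ext_restr (Hext p)).
by rewrite -Hcomp.
Qed.

Definition dst g x : R :=
  x g - (if qidx Gam g is p.+1 then i p (restr (Gam p) x) g else 0).

Lemma dst_dvec g h : dst g (dvec Gam i h) = unitvec R g h.
Proof.
rewrite /dst /dvec; set m := qidx Gam h.
have se : supported (Gam m) (unitvec R h) by apply: unitvec_supp; apply: Gam_qidx.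
case E: (qidx Gam g) => [|p].
  rewrite subr0 extE //; first by rewrite unitvecC.
  by apply: (Gmono (leq0n m)); rewrite -E; apply: Gam_qidx.
case: (leqP m p) => mp.
  rewrite compat_le // subrr unitvec_neq // => gh.
  by move: mp; rewrite /m -gh E ltnn.
have -> : restr (Gam p) (i m (unitvec R h)) = (fun _ => 0).
  apply: funext => t; case: (pselect (Gam p t)) => pt; last by rewrite restr_out.
  rewrite restr_in // extE //; last by apply: (Gmono (ltnW mp)).
  apply: unitvec_neq => ht; apply: (qidx_min mp); by rewrite ht.
rewrite (lin0 (Hext p)) subr0 extE //; first by rewrite unitvecC.
by apply: (Gmono mp); rewrite -E; apply: Gam_qidx.
Qed.

Lemma restr_bound (A : set T) x (M : R) : 0 <= M -> (forall t, `|x t| <= M) ->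
  forall t, `|restr A x t| <= M.
Proof.
move=> M0 hx t; case: (pselect (A t)) => At; first by rewrite restr_in.
by rewrite restr_out // normr0.
Qed.

Lemma dst_is_dstar g : is_dstar Gam i g (dst g).
Proof.
split; last exact: dst_dvec.
  move=> a x y _ _; rewrite /dst; case: (qidx Gam g) => [|p]; first by ring.
  rewrite restrL (linE _ (Hext p) (restr_supp (A:=Gam p) x) (restr_supp (A:=Gam p) y)); ring.
case: HCb => C0 HC0; exists (1 + C0) => x _ M hx.
have M0 : 0 <= M by apply: le_trans (hx g).
have hb := fun q => HC0 q _ (restr_supp (A:=Gam q) x) M (restr_bound (Gam q) M0 hx) g.
have h0 := hb 0%N; have n0 := normr_ge0 (i 0 (restr (Gam 0) x) g).
rewrite /dst; case: (qidx Gam g) => [|p].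
  by rewrite subr0 mulrDl mul1r; have := hx g; lra.
have := hb p; have := hx g; have := ler_normB (x g) (i p (restr (Gam p) x) g).
rewrite mulrDl mul1r; lra.
Qed.

Definition Sp x := exists l : seq (R * {classic T}),
  x = fun t => \sum_(p <- l) p.1 * dvec Gam i p.2 t.

Lemma SpL (a : R) x y : Sp x -> Sp y -> Sp (fun t => a * x t + y t).
Proof.
move=> [l1 ->] [l2 ->]; exists (map (fun p => (a * p.1, p.2)) l1 ++ l2).
apply: funext => t; rewrite big_cat big_map /= big_distrr /=.
by congr (_ + _); apply: eq_bigr => p _; rewrite mulrA.
Qed.

Lemma Sp_d (a : R) g : Sp (fun t => a * dvec Gam i g t).
Proof. by exists [:: (a, g : {classic T})]; apply: funext => t; rewrite big_seq1. Qed.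

Lemma Sp_span x : Sp x -> exists (s : seq T) (c : T -> R), x = span_comb Gam i s c.
Proof.
move=> [l ->].
pose s : seq {classic T} := undup (map snd l).
exists s, (fun k => \sum_(p <- l | p.2 == (k : {classic T})) p.1).
apply: funext => t; rewrite /span_comb.
transitivity (\sum_(p <- l) \sum_(k <- s) (if p.2 == k then p.1 * dvec Gam i p.2 t else 0)).
  apply: eq_big_seq => p pl.
  have ps : p.2 \in s by rewrite mem_undup; apply: map_f.
  rewrite (bigD1_seq p.2) ?undup_uniq //= eqxx big1 ?addr0 // => k kp.
  by rewrite eq_sym (negbTE kp).
rewrite exchange_big; apply: eq_bigr => k _; rewrite big_distrl /= [RHS]big_mkcond /=.
by apply: eq_bigr => p _; case: eqP => [->|]; rewrite ?mul0r.
Qed.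

Lemma Sp_BD x : Sp x -> bounded_vec x -> BDspace Gam i x.
Proof.
move=> /Sp_span [s [c ->]] bx; split=> // e e0; exists s, c => t.
by rewrite subrr normr0 ltW.
Qed.

Lemma restr_id (A : set T) y : supported A y -> restr A y = y.
Proof.
move=> sy; apply: funext => t; case: (pselect (A t)) => At.
  by rewrite restr_in. by rewrite restr_out // sy.
Qed.

Lemma enum_Gam q : exists s : seq {classic T},
  uniq s /\ forall t, Gam q t <-> (t : {classic T}) \in s.
Proof.
have [s E] := (@finite_seqP {classic T} (Gam q)).1 (Hfin q).
exists (undup s); split; first exact: undup_uniq.
by move=> t; rewrite mem_undup E.
Qed.

Lemma DEC q (s : seq {classic T}) u : uniq s -> (forall t, Gam q t <-> (t : {classic T}) \in s) ->
  supported (Gam q) u ->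
  u = fun t => \sum_(j <- s) u j * restr (Gam q) (unitvec R j) t.
Proof.
move=> us Es su; apply: funext => t.
case: (pselect (Gam q t)) => qt.
  have ts : (t : {classic T}) \in s by apply/Es.
  rewrite (bigD1_seq (t : {classic T})) //= restr_in // unitvec_eq mulr1 big1 ?addr0 //.
  move=> j jt; case: (pselect (Gam q t)) => [qt'|]; last by [].
  rewrite restr_in // unitvec_neq ?mulr0 //.
  by move=> jt'; move: jt; rewrite jt' eqxx.
rewrite su // big1 // => j _; by rewrite restr_out // mulr0.
Qed.

Lemma Delta_Gam q : Delta Gam q `<=` Gam q.
Proof. by move=> t /DeltaP[]. Qed.

Lemma Sp_delta L u : supported (Delta Gam L) u -> Sp (i L u).
Proof.
move=> su; have su' : supported (Gam L) u by apply: supp_sub su; apply: Delta_Gam.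
have [s [us Es]] := enum_Gam L.
rewrite {1}(DEC us Es su'); exists (map (fun j => (u j, j)) s).
apply: funext => t.
rewrite (lin_sum _ _ (Hext L)); last by move=> k; apply: restr_supp.
rewrite big_map; apply: eq_big_seq => j js /=.
case: (pselect (Delta Gam L j)) => dj; last by rewrite su // !mul0r.
rewrite /dvec (qidx_eq dj) restr_id //; apply: unitvec_supp.
by apply/Es.
Qed.

Definition uD L y := fun t => if `[< Gam L t >] then 0 else y t.

Lemma uD_supp L y : supported (Gam L.+1) y -> supported (Delta Gam L.+1) (uD L y).
Proof.
move=> sy t /= nd; rewrite /uD; case: (pselect (Gam L t)) => Lt.
  by rewrite asboolT.
by rewrite asboolF // sy // => L1t; apply: nd.
Qed.

Lemma uD_split L y : y = fun t => 1 * restr (Gam L) y t + uD L y t.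
Proof.
apply: funext => t; rewrite /uD /restr; case: (pselect (Gam L t)) => Lt.
  by rewrite asboolT // mul1r addr0.
by rewrite asboolF // mulr0 add0r.
Qed.

Lemma restr_restr (A B : set T) y : A `<=` B -> restr A (restr B y) = restr A y.
Proof.
move=> AB; apply: funext => t; case: (pselect (A t)) => At.
  by rewrite !restr_in //; apply: AB.
by rewrite !restr_out.
Qed.

Lemma Sp_ext L z : supported (Gam L) z -> Sp (i L z).
Proof.
elim: L z => [|L IH] z sz; first exact: Sp_delta.
set w := restr (Gam L) z.
have sw : supported (Gam L) w by apply: restr_supp.
set y' := restr (Gam L.+1) (i L w).
have sy' : supported (Gam L.+1) y' by apply: restr_supp.
have E1 : i L w = i L.+1 y' by apply: Hcomp.
have E2 : restr (Gam L) y' = w.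
  by rewrite /y' restr_restr ?(ext_restr (Hext L)) //; apply: (Gmono (leqnSn L)).
have E3 : forall t, i L w t = 1 * i L.+1 w t + i L.+1 (uD L y') t.
  move=> t; rewrite E1 {1}(uD_split L y') E2.
  apply: (linE _ (Hext L.+1)) => //; first by apply: supp_sub sw; apply: Gmono.
  by apply: supp_sub (uD_supp sy'); apply: Delta_Gam.
have E4 : forall t, i L.+1 z t = 1 * i L.+1 w t + i L.+1 (uD L z) t.
  move=> t; rewrite {1}(uD_split L z).
  apply: (linE _ (Hext L.+1)) => //; first by apply: supp_sub sw; apply: Gmono.
  by apply: supp_sub (uD_supp sz); apply: Delta_Gam.
have -> : i L.+1 z = fun t => 1 * i L w t + ((-1) * i L.+1 (uD L y') t + i L.+1 (uD L z) t).
  by apply: funext => t; rewrite E4 E3; ring.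
apply: SpL; first exact: IH.
by apply: SpL; apply: Sp_delta; apply: uD_supp.
Qed.

Lemma BD_ext L z : supported (Gam L) z -> BDspace Gam i (i L z).
Proof.
move=> sz; apply: Sp_BD; first exact: Sp_ext.
by case: (Hext L) => _ /(_ z sz) [].
Qed.

Lemma sum_In (s : seq T) (F : T -> R) : (forall k, List.In k s -> F k = 0) ->
  \sum_(k <- s) F k = 0.
Proof.
elim: s => [|k s IH] h; first by rewrite big_nil.
rewrite big_cons h /=; last by left.
by rewrite add0r IH // => k' ks; apply: h; right.
Qed.

Lemma exL p (s : seq T) : exists L, (p <= L)%N /\ forall k, List.In k s -> Gam L k.
Proof.
elim: s => [|k s [L [pL IH]]]; first by exists p.
exists (maxn L (qidx Gam k)); split; first by apply: leq_trans pL (leq_maxl _ _).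
move=> k' /= [<-|ks]; first by apply: (Gmono (leq_maxr _ _)); apply: Gam_qidx.
by apply: (Gmono (leq_maxl _ _)); apply: IH.
Qed.

Variable G' : set T.
Hypothesis Hsd : self_determined Gam i G'.

Lemma KEY g p z : G' g -> qidx Gam g = p.+1 -> supported (Gam p) z ->
  (forall k, G' k -> z k = 0) -> i p z g = 0.
Proof.
move=> Gg Eg sz z0; case: Hsd => _ H.
have [s [c [c0 Hf]]] := H g Gg (dst g) (dst_is_dstar g).
have [L [pL HL]] := exL p.+1 s.
have szL : supported (Gam L) z by apply: supp_sub sz; apply: Gmono; apply: ltnW.
have := Hf _ (BD_ext szL).
rewrite sum_In; last first.
  move=> k ks; rewrite extE //; last exact: HL.
  by case: (pselect (G' k)) => Gk; [rewrite z0 // mulr0 | rewrite c0 // mul0r].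
rewrite /dst Eg extE //; last by apply: (Gmono pL); rewrite -Eg; apply: Gam_qidx.
have -> : restr (Gam p) (i L z) = z.
  rewrite -(@restr_restr (Gam p) (Gam L)); last by apply: Gmono; apply: ltnW.
  by rewrite (ext_restr (Hext L)) // restr_id.
by rewrite z0 // sub0r => /eqP; rewrite oppr_eq0 => /eqP.
Qed.

Lemma VAN n g Q z : G' g -> (qidx Gam g < n)%N -> supported (Gam Q) z ->
  (forall k, G' k -> z k = 0) -> i Q z g = 0.
Proof.
elim: n g Q z => [//|n IH] g Q z Gg gn sz z0.
case: (leqP (qidx Gam g) Q) => gQ.
  by rewrite extE // ?z0 //; apply: (Gmono gQ); apply: Gam_qidx.
case Eg: (qidx Gam g) gQ gn => [//|p] Qp pn.
set w := restr (Gam p) (i Q z).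
have -> : i Q z = i p w by rewrite /w compat_le.
apply: (KEY Gg Eg); first exact: restr_supp.
move=> k Gk; case: (pselect (Gam p k)) => pk; last by rewrite /w restr_out.
rewrite /w restr_in //; apply: (IH k Q z Gk) => //.
by apply: leq_ltn_trans (qidx_le pk) _.
Qed.
End BD2.

Lemma restr_norm (R : realType) (T : Type) (A : set T) (y : T -> R) t :
  `|restr A y t| <= `|y t|.
Proof.
case: (pselect (A t)) => At; first by rewrite restr_in.
by rewrite restr_out // normr0.
Qed.

Theorem proposition1p9 (R : realType) (T : Type) (Gam : nat -> set T)
  (i : nat -> (T -> R) -> (T -> R)) (G' : set T) (qs : nat -> nat) :
  BD_data [set: T] Gam i ->
  self_determined Gam i G' ->
  (forall s, (qs s < qs s.+1)%N) ->
  (forall q, (exists s, qs s = q) <-> (G' `&` Delta Gam q !=set0)) ->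
  let Gam' := fun s => G' `&` Gam (qs s) in
  let i' := fun s (x : T -> R) => restr G' (i (qs s) x) in
  BD_data G' Gam' i' /\
  (forall C : R, (forall q, op_norm_le (Gam q) (i q) C) ->
     forall s, op_norm_le (Gam' s) (i' s) C).
Proof.
move=> [Hfq [Hinc [Hcup [Hext [HCb Hcomp]]]]] Hsd Hqs HD Gam' i'.
have Hfin : forall q, finite_set (Gam q) by move=> q; case: (Hfq q).
have qs_mono : forall s1 s2, (s1 < s2)%N -> (qs s1 < qs s2)%N.
  move=> s1; elim=> [//|s2 IH]; rewrite ltnS leq_eqVlt => /orP[/eqP ->//|/IH h].
  exact: ltn_trans h (Hqs s2).
have qs_ge : forall s, (s <= qs s)%N.
  elim=> [//|s IH]; exact: leq_ltn_trans IH (Hqs s).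
have sub' : forall s, Gam' s `<=` Gam (qs s) by move=> s t [].
have NORM : forall C : R, (forall q, op_norm_le (Gam q) (i q) C) ->
     forall s, op_norm_le (Gam' s) (i' s) C.
  move=> C HC s x sx M hx t.
  have sx' : supported (Gam (qs s)) x by apply: supp_sub sx; apply: sub'.
  have h := HC (qs s) x sx' M hx t.
  by apply: le_trans h; apply: restr_norm.
split; last exact: NORM.
split.
  move=> s; split; first exact: finite_setIr.
  have [g [G'g Dg]] := (HD (qs s)).1 (ex_intro _ s erefl).
  by exists g; split=> //; case/(DeltaP Hinc): Dg.
split.
  move=> s; split.
    by move=> t [Gt qt]; split=> //; apply: (Gmono Hinc (ltnW (Hqs s))) qt.
  have [g [G'g Dg]] := (HD (qs s.+1)).1 (ex_intro _ s.+1 erefl).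
  move=> sub; have [_ qg] := sub g (conj G'g ((DeltaP Hinc _ _).1 Dg).1).
  by case/(DeltaP Hinc): Dg => _ /(_ _ (Hqs s)).
split.
  apply/seteqP; split; first by move=> t [s _ []].
  move=> t Gt; have [n _ nt] : (\bigcup_q Gam q) t by rewrite Hcup.
  by exists n => //; split=> //; apply: (Gmono Hinc (qs_ge n)) nt.
split.
  move=> s; have [L B E] := Hext (qs s); split.
  - move=> a x y sx sy; rewrite /i' -restrL; congr restr; apply: L.
      by apply: supp_sub sx; apply: sub'.
    by apply: supp_sub sy; apply: sub'.
  - move=> x sx; split; first exact: restr_supp.
    have [_ [M hM]] := B x (supp_sub (sub' s) sx).
    by exists M => t; apply: le_trans (hM t); apply: restr_norm.
  - move=> x sx t [Gt qt]; rewrite /i' restr_in // E //.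
    by apply: supp_sub sx; apply: sub'.
split.
  by case: HCb => C HC; exists C; apply: NORM.
move=> p q pq x sx; rewrite /i' /Gam'.
have sx' : supported (Gam (qs p)) x by apply: supp_sub sx; apply: sub'.
rewrite {1}(Hcomp _ _ (qs_mono _ _ pq) x sx').
set y := i (qs p) x; set Q := qs q.
apply: funext => t; case: (pselect (G' t)) => Gt; last by rewrite !restr_out.
rewrite !restr_in //.
set v := restr (G' `&` Gam Q) (restr G' y).
set u := fun t => if `[< G' t >] then 0 else restr (Gam Q) y t.
have sv : supported (Gam Q) v.
  by apply: supp_sub (restr_supp (A:=G' `&` Gam Q) _) => k [].
have su : supported (Gam Q) u.
  by move=> k kQ; rewrite /u restr_out //; case: asboolP.
have Ey : restr (Gam Q) y = fun t => 1 * v t + u t.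
  apply: funext => k; rewrite mul1r.
  case: (pselect (G' k)) => Gk; last first.
    have -> : v k = 0 by rewrite /v restr_out // => -[].
    by rewrite /u asboolF // add0r.
  rewrite /u /v asboolT // addr0; case: (pselect (Gam Q k)) => Qk.
    by rewrite !restr_in.
  by rewrite !restr_out // => -[].
rewrite Ey (linE _ (Hext Q) sv su) mul1r.
rewrite (@VAN R T Gam i Hext Hinc Hcup Hcomp Hfin HCb G' Hsd (qidx Gam t).+1 t Q u) //.
  by rewrite addr0.
by move=> k Gk; rewrite /u asboolT.
Qed.
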